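(* Let $\mathbf{k}$ be an algebraically closed field with $\mathrm{char}(\mathbf{k})\neq 2$, let $S=\mathbf{k}[x,y,z,w]$, and let $\mathcal{H}$ be the standard graded Hilbert scheme parametrizing homogeneous ideals $I\subseteq S$ such that $S/I$ has Hilbert function $(1,4,4,4,\ldots)$. Let $\mathcal{X}$ be the closure in $\mathcal{H}$ of the (open) locus of ideals $I\in\mathcal{H}$ that are saturated. Then the lexicographic ideal $L=(x^2,xy,xz,xw,y^2,yz,yw^2,z^4)$ of $\mathcal{H}$ belongs to $\mathcal{X}$.
   Context: The lexicographic order is taken with $x>y>z>w$; the lexicographic ideal is the unique monomial ideal in $\mathcal{H}$ each of whose graded components is spanned by the lexicographically largest monomials of that degree. *)

(* Defs.v *)
From HB Require Import structures.
From mathcomp Require Import all_boot all_order all_algebra.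
From mathcomp Require Import mpoly.



Unset Printing Implicit Defensive.

Import GRing.Theory.
Local Open Scope ring_scope.

Section HilbertScheme.
Variable k : fieldType.

Definition Poly := {mpoly k[4]}.

Definition xv : Poly := 'X_(@Ordinal 4 0 isT).
Definition yv : Poly := 'X_(@Ordinal 4 1 isT).
Definition zv : Poly := 'X_(@Ordinal 4 2 isT).
Definition wv : Poly := 'X_(@Ordinal 4 3 isT).

Definition is_ideal (I : Poly -> Prop) : Prop :=
  [/\ I 0, (forall p q, I p -> I q -> I (p + q)) &
      (forall p q, I q -> I (p * q))].

Definition hcomp (d : nat) (p : Poly) : Poly :=
  \sum_(m <- msupp p | mdeg m == d) p@_m *: 'X_[m].

Definition is_homog_ideal (I : Poly -> Prop) : Prop :=
  is_ideal I /\ forall p d, I p -> I (hcomp d p).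

Definition gen_ideal (gs : seq Poly) (p : Poly) : Prop :=
  exists c : 'I_(size gs) -> Poly, p = \sum_(i < size gs) c i * gs`_i.

Definition mon (d : nat) := {m : 'X_{1..4 < d.+1} | mdeg (val m) == d}.
Definition monpoly d (m : mon d) : Poly := 'X_[val (val m)].

Arguments monpoly {d}.

Definition hf (d : nat) : nat := if d == 0%N then 1%N else 4%N.
(* dim_k I_d = dim_k S_d - h(d) *)
Definition rk (d : nat) : nat := (#|{: mon d}| - hf d)%N.

Definition vec_of d (c : mon d -> k) : Poly := \sum_(m : mon d) c m *: monpoly m.

Arguments vec_of {d}.

(* B (a rk d x #mon d coefficient matrix) is a basis of the graded piece I_d *)
Definition basis_of_deg (I : Poly -> Prop) (d : nat)
    (B : 'I_(rk d) -> mon d -> k) : Prop :=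
  (forall c : 'I_(rk d) -> k,
      \sum_(i < rk d) c i *: vec_of (B i) = 0 -> forall i, c i = 0) /\
  (forall p : Poly, (I p /\ hcomp d p = p) <->
      exists c : 'I_(rk d) -> k, p = \sum_(i < rk d) c i *: vec_of (B i)).

(* k-points of the standard graded Hilbert scheme H with Hilbert function
   (1,4,4,4,...): homogeneous ideals I with dim_k (S/I)_d = hf d for all d *)
Definition in_H (I : Poly -> Prop) : Prop :=
  is_homog_ideal I /\ forall d, exists B, basis_of_deg I d B.

(* saturation: I = I : m^oo, m = (x,y,z,w) *)
Definition saturated (I : Poly -> Prop) : Prop :=
  forall f : Poly,
    (exists n : nat, forall m : 'X_{1..4}, mdeg m = n -> I ('X_[m] * f)) -> I f.

Definition sat_locus (I : Poly -> Prop) : Prop := in_H I /\ saturated I.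

(* Coordinates on prod_{d <= D} (Stiefel variety of rk d frames in S_d). *)
Definition Var (D : nat) :=
  {d : 'I_D.+1 & ('I_(rk d) * mon d)%type}.


Definition represents (D : nat) (I : Poly -> Prop) (a : Var D -> k) : Prop :=
  forall d : 'I_D.+1,
    basis_of_deg I d (fun i m => a (Tagged (fun d : 'I_D.+1 =>
                                              ('I_(rk d) * mon d)%type) (i, m))).

Definition evalV D (f : {mpoly k[#|{: Var D}|]}) (a : Var D -> k) : k :=
  f.@[fun j => a (enum_val j)].

(* I lies in the Zariski closure (in H) of the set X of points of H.
   The topology on the k-points of H is the initial topology for the
   truncation maps I |-> (I_0,...,I_D) into prod_{d<=D} Gr(rk d, S_d) (D in nat),
   each product of Grassmannians carrying its Zariski topology, described as
   the quotient topology from the product of Stiefel varieties (full-rank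
   frames), an open subset of affine space. *)
Definition in_closure (X : (Poly -> Prop) -> Prop) (I : Poly -> Prop) : Prop :=
  in_H I /\
  forall (D : nat) (a : Var D -> k), represents D I a ->
  forall f : {mpoly k[#|{: Var D}|]},
    (forall (J : Poly -> Prop) (b : Var D -> k),
        X J -> represents D J b -> evalV D f b = 0) ->
    evalV D f a = 0.

Definition Lgens : seq Poly :=
  [:: xv ^+ 2; xv * yv; xv * zv; xv * wv; yv ^+ 2; yv * zv; yv * wv ^+ 2;
      zv ^+ 4].
Definition Llex : Poly -> Prop := gen_ideal Lgens.

End HilbertScheme.

(* Main.v *)
Require Import Defs.
From mathcomp Require Import all_boot all_order all_algebra.
From mathcomp Require Import mpoly.
From mathcomp Require Import zify ring.
Local Open Scope ring_scope.
Import GRing.Theory.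
Set Warnings "-notation-overridden,-ambiguous-paths,-notation-incompatible-prefix,-deprecated".
Set Implicit Arguments. Unset Strict Implicit. Unset Printing Implicit Defensive.
Definition i0 : 'I_4 := @Ordinal 4 0 isT.
Definition i1 : 'I_4 := @Ordinal 4 1 isT.
Definition i2 : 'I_4 := @Ordinal 4 2 isT.
Definition i3 : 'I_4 := @Ordinal 4 3 isT.

Lemma ord4P (P : 'I_4 -> Prop) : P i0 -> P i1 -> P i2 -> P i3 -> forall j, P j.
Proof.
move=> h0 h1 h2 h3 [[|[|[|[|j]]]] Hj] //.
- by rewrite (_ : Ordinal Hj = i0) //; apply/val_inj.
- by rewrite (_ : Ordinal Hj = i1) //; apply/val_inj.
- by rewrite (_ : Ordinal Hj = i2) //; apply/val_inj.
- by rewrite (_ : Ordinal Hj = i3) //; apply/val_inj.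
Qed.

Lemma big4 (R : Type) (idx : R) (op : Monoid.com_law idx) (F : 'I_4 -> R) :
  \big[op/idx]_(j < 4) F j = op (op (op (F i0) (F i1)) (F i2)) (F i3).
Proof.
rewrite !big_ord_recr big_ord0 /= Monoid.mul1m.
congr (op (op (op (F _) (F _)) (F _)) (F _)); by apply/val_inj.
Qed.

Lemma mdeg4 (m : 'X_{1..4}) : mdeg m = (m i0 + m i1 + m i2 + m i3)%N.
Proof. by rewrite mdegE big4. Qed.

Definition om (m : 'X_{1..4}) : nat := (8 * m i0 + 4 * m i1 + m i2)%N.
Definition Nw (m : 'X_{1..4}) : nat := (2 * m i0 + 3 * m i1 + m i2)%N.
Definition inL (m : 'X_{1..4}) : bool :=
  [|| (2 <= m i0)%N, (1 <= m i0)%N && (1 <= m i1 + m i2 + m i3)%N, (2 <= m i1)%N,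
      (1 <= m i1)%N && (1 <= m i2)%N, (1 <= m i1)%N && (2 <= m i3)%N | (4 <= m i2)%N].

Lemma inL_deg m : inL m -> (2 <= mdeg m)%N.
Proof. rewrite mdeg4 /inL => H; lia. Qed.

Lemma std_N m : ~~ inL m -> (Nw m < 4)%N.
Proof. rewrite /Nw /inL => H; lia. Qed.

Lemma om_lt m u : inL m -> ~~ inL u -> mdeg m = mdeg u -> (om u < om m)%N.
Proof. rewrite !mdeg4 /om /inL => H1 H2 H3; lia. Qed.

Lemma std_inj m u : ~~ inL m -> ~~ inL u -> mdeg m = mdeg u -> Nw m = Nw u -> m = u.
Proof.
rewrite !mdeg4 /Nw /inL => H1 H2 H3 H4; apply/mnmP; apply: ord4P; lia.
Qed.
Section Gen.
Variable k : fieldType.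
Notation vv u := (bmnm (val u)).

Lemma vv_inj d (u u' : mon d) : vv u = vv u' -> u = u'.
Proof. by move=> h; apply/val_inj/val_inj. Qed.

Lemma vv_deg d (u : mon d) : mdeg (vv u) = d.
Proof. by case: u => ? /= /eqP. Qed.

Lemma mon_ex d (m : 'X_{1..4}) : mdeg m = d -> exists u : mon d, vv u = m.
Proof.
move=> <-; have h1 : (mdeg m < (mdeg m).+1)%N by [].
by exists (exist _ (BMultinom h1) (eqxx _)).
Qed.

Lemma vec_coef d (c : mon d -> k) (u : mon d) : (vec_of k d c)@_(vv u) = c u.
Proof.
rewrite /vec_of raddf_sum (bigD1 u) //= big1 ?addr0.
  by rewrite mcoeffZ /monpoly mcoeffX eqxx mulr1.
move=> u' ne; rewrite mcoeffZ /monpoly mcoeffX.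
case: eqP => [/vv_inj E|]; last by rewrite mulr0.
by rewrite E eqxx in ne.
Qed.

Lemma vec_coef0 d (c : mon d -> k) m : mdeg m != d -> (vec_of k d c)@_m = 0.
Proof.
move=> ne; rewrite /vec_of raddf_sum /= big1 // => u _.
rewrite mcoeffZ /monpoly mcoeffX; case: eqP => [E|]; last by rewrite mulr0.
by rewrite -E vv_deg eqxx in ne.
Qed.

Lemma hcomp_coef d (p : Defs.Poly k) m :
  (Defs.hcomp k d p)@_m = if mdeg m == d then p@_m else 0.
Proof.
rewrite /Defs.hcomp raddf_sum /= -big_filter.
have [mi|mni] := boolP (m \in msupp p); last first.
  rewrite big1 ?(memN_msupp_eq0 mni) ?if_same // => m' _.
  rewrite mcoeffZ mcoeffX; case: eqP => [E|]; last by rewrite mulr0.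
  by rewrite E (memN_msupp_eq0 mni) mul0r.
case: ifP => hd.
  rewrite (bigD1_seq m) /= ?mem_filter ?hd ?mi ?filter_uniq ?msupp_uniq //.
  rewrite mcoeffZ mcoeffX eqxx mulr1 big1 ?addr0 // => m' ne.
  by rewrite mcoeffZ mcoeffX (negbTE ne) mulr0.
rewrite big_seq big1 // => m'; rewrite mem_filter => /andP [/eqP h _].
rewrite mcoeffZ mcoeffX; case: eqP => [E|]; last by rewrite mulr0.
by rewrite -E h eqxx in hd.
Qed.

Lemma hcomp_vec d (c : mon d -> k) : Defs.hcomp k d (vec_of k d c) = vec_of k d c.
Proof.
apply/mpolyP => m; rewrite hcomp_coef; case: eqP => // /eqP ne.
by rewrite vec_coef0.
Qed.

Lemma hom_vec d (p : Defs.Poly k) : Defs.hcomp k d p = p ->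
  p = vec_of k d (fun u => p@_(vv u)).
Proof.
move=> hp; apply/mpolyP => m.
have [/eqP hd|hd] := boolP (mdeg m == d).
  by have [u <-] := mon_ex hd; rewrite vec_coef.
by rewrite vec_coef0 // -hp hcomp_coef (negbTE hd).
Qed.

Lemma vec_lin d n (c : 'I_n -> k) (B : 'I_n -> mon d -> k) :
  \sum_(i < n) c i *: vec_of k d (B i) = vec_of k d (fun u => \sum_(i < n) c i * B i u).
Proof.
rewrite /vec_of; under eq_bigr do rewrite scaler_sumr.
rewrite exchange_big /=; apply: eq_bigr => u _.
by rewrite scaler_suml; apply: eq_bigr => i _; rewrite scalerA.
Qed.

Lemma vecB d (c c' : mon d -> k) :
  vec_of k d c - vec_of k d c' = vec_of k d (fun u => c u - c' u).
Proof.
by rewrite /vec_of -sumrB; apply: eq_bigr => u _; rewrite scalerBl.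
Qed.

Lemma vec_eq0 d (c : mon d -> k) : vec_of k d c = 0 -> forall u, c u = 0.
Proof. by move=> h u; rewrite -vec_coef h mcoeff0. Qed.

Lemma vec_eq d (c c' : mon d -> k) : (forall u, c u = c' u) -> vec_of k d c = vec_of k d c'.
Proof. by move=> h; apply: eq_bigr => u _; rewrite h. Qed.

Lemma vec_supp d (c : mon d -> k) m : (vec_of k d c)@_m != 0 ->
  exists u : mon d, vv u = m /\ c u != 0.
Proof.
have [/eqP hd|hd] := boolP (mdeg m == d).
  by have [u <-] := mon_ex hd; rewrite vec_coef => h; exists u.
by rewrite vec_coef0 // eqxx.
Qed.

End Gen.
Definition mk4 (a b c e : nat) : 'X_{1..4} := [multinom nth 0%N [:: a; b; c; e] i | i < 4].

Lemma mk4E a b c e : [/\ mk4 a b c e i0 = a, mk4 a b c e i1 = b, mk4 a b c e i2 = c & mk4 a b c e i3 = e].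
Proof. by rewrite /mk4 !mnmE. Qed.

Lemma mdeg_mk4 a b c e : mdeg (mk4 a b c e) = (a + b + c + e)%N.
Proof. by rewrite mdeg4; case: (mk4E a b c e) => -> -> -> ->. Qed.

Lemma lem4 (g m : 'X_{1..4}) :
  (g <= m)%MM = [&& g i0 <= m i0, g i1 <= m i1, g i2 <= m i2 & g i3 <= m i3]%N.
Proof.
apply/mnm_lepP/idP.
  by move=> h; rewrite !h.
by case/and4P => h0 h1 h2 h3; apply: ord4P.
Qed.

Definition Lmon : seq 'X_{1..4} :=
  [:: mk4 2 0 0 0; mk4 1 1 0 0; mk4 1 0 1 0; mk4 1 0 0 1; mk4 0 2 0 0;
      mk4 0 1 1 0; mk4 0 1 0 2; mk4 0 0 4 0].

Lemma inL_up (g m : 'X_{1..4}) : inL g -> inL (g + m)%MM.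
Proof. rewrite /inL !mnmDE => h; lia. Qed.

Lemma Lmon_inL g : g \in Lmon -> inL g.
Proof.
rewrite /Lmon !inE => h.
repeat (case/orP: h => [/eqP ->|h]; first by rewrite /inL !(mnmE) /=).
by move/eqP: h => ->; rewrite /inL !mnmE.
Qed.

Lemma inL_Lmon m : inL m -> has (fun g => (g <= m)%MM) Lmon.
Proof.
rewrite /= !lem4 /inL !mnmE /= => h; lia.
Qed.

Section Lsec.
Variable k : fieldType.
Notation vv u := (bmnm (val u)).

Lemma X_mk4 a b c e :
  'X_[mk4 a b c e] = xv k ^+ a * yv k ^+ b * zv k ^+ c * wv k ^+ e :> Defs.Poly k.
Proof.
rewrite mpolyXE_id big4; case: (mk4E a b c e) => -> -> -> ->.
by [].
Qed.

Lemma LgensE : Lgens k = [seq 'X_[m] | m <- Lmon].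
Proof.
rewrite /Lgens /Lmon /= !X_mk4 !expr0 !expr1 !mulr1 !mul1r //.
Qed.

Lemma gen_ideal_ideal (gs : seq (Defs.Poly k)) : is_ideal k (gen_ideal k gs).
Proof.
split.
- by exists (fun _ => 0); rewrite big1 // => i _; rewrite mul0r.
- move=> p q [c ->] [c' ->]; exists (fun i => c i + c' i).
  by rewrite -big_split; apply: eq_bigr => i _; rewrite mulrDl.
- move=> p q [c ->]; exists (fun i => p * c i).
  by rewrite mulr_sumr; apply: eq_bigr => i _; rewrite mulrA.
Qed.

Lemma gen_gen (gs : seq (Defs.Poly k)) i : (i < size gs)%N -> gen_ideal k gs gs`_i.
Proof.
move=> hi; exists (fun j => ((j : nat) == i)%:R).
rewrite (bigD1 (Ordinal hi)) //= eqxx mul1r big1 ?addr0 // => j ne.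
case: eqP => [E|]; last by rewrite mul0r.
by case/eqP: ne; apply/val_inj.
Qed.



Definition Ssupp (p : Defs.Poly k) := forall m, m \in msupp p -> inL m.

Lemma LL1 p : Llex k p -> Ssupp p.
Proof.
case=> c ->.
apply: (big_ind Ssupp).
- by move=> m; rewrite msupp0.
- move=> x y hx hy m /msuppD_le; rewrite mem_cat => /orP [/hx|/hy] //.
- move=> i _ m.
  have hi : (i < size Lmon)%N by case: i.
  have E : forall j : nat, (j < size Lmon)%N -> (Lgens k)`_j = 'X_[nth 0%MM Lmon j].
    by move=> j hj; rewrite LgensE (nth_map 0%MM).
  rewrite (E i hi) (perm_mem (msuppMX _ _)) => /mapP [m' _ ->].
  by apply: inL_up; apply: Lmon_inL; apply: mem_nth.
Qed.

Lemma LX m : inL m -> Llex k 'X_[m].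
Proof.
move/inL_Lmon/hasP => [g gin gle].
have -> : 'X_[m] = 'X_[m - g] * 'X_[g] :> Defs.Poly k by rewrite -mpolyXD submK.
case: (gen_ideal_ideal (Lgens k)) => _ _ hM; apply: hM.
have hi : (index g Lmon < size (Lgens k))%N by rewrite LgensE size_map index_mem.
have := gen_gen hi; rewrite {2}LgensE (nth_map 0%MM) ?index_mem // nth_index //.
Qed.

Lemma LL2 p : Ssupp p -> Llex k p.
Proof.
move=> hs; rewrite (mpolyE p).
case: (gen_ideal_ideal (Lgens k)) => h0 hD hM.
rewrite big_seq; apply: (big_ind (Llex k)) => // m hm.
rewrite -mul_mpolyC; apply: hM; apply: LX; exact: hs.
Qed.

Lemma Lhom_char d p : (Llex k p /\ Defs.hcomp k d p = p) <->
  exists g : mon d -> k, p = vec_of k d g /\ forall u, ~~ inL (vv u) -> g u = 0.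
Proof.
split.
  case=> hL hh; exists (fun u => p@_(vv u)); split; first exact: hom_vec.
  move=> u hu; apply/eqP; rewrite mcoeff_eq0; apply/negP => /(LL1 hL).
  by rewrite (negbTE hu).
case=> g [-> hg]; split; last exact: hcomp_vec.
apply: LL2 => m; rewrite mcoeff_msupp => /vec_supp [u [<- hu]].
by apply/negPn/negP => /hg; apply/eqP.
Qed.

Lemma Lhomog : is_homog_ideal k (Llex k).
Proof.
split; first exact: gen_ideal_ideal.
move=> p d /LL1 hp; apply: LL2 => m; rewrite mcoeff_msupp hcomp_coef.
by case: ifP => _; rewrite ?eqxx // -mcoeff_msupp => /hp.
Qed.

End Lsec.
Notation vv u := (bmnm (val u)).

Lemma card1_uniq (T : finType) (P : pred T) u0 :
  P u0 -> (forall u, P u -> u = u0) -> #|P| = 1%N.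
Proof.
move=> h0 h; apply/eqP/card1P; exists u0 => u; rewrite !inE.
apply/idP/eqP => [/h //|->]; exact: h0.
Qed.

Lemma std_mk4 d j a b c e : (a + b + c + e = d)%N ->
  ~~ inL (mk4 a b c e) -> Nw (mk4 a b c e) = j ->
  exists u : mon d, ~~ inL (vv u) /\ Nw (vv u) = j.
Proof.
move=> hd h1 h2; rewrite -mdeg_mk4 in hd.
by have [u hu] := mon_ex hd; exists u; rewrite hu.
Qed.

Lemma std_mk4' d j a b c e : (a + b + c + e = d)%N ->
  ~~ [|| (2 <= a)%N, (1 <= a)%N && (1 <= b + c + e)%N, (2 <= b)%N,
      (1 <= b)%N && (1 <= c)%N, (1 <= b)%N && (2 <= e)%N | (4 <= c)%N] ->
  (2 * a + 3 * b + c = j)%N ->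
  exists u : mon d, ~~ inL (vv u) /\ Nw (vv u) = j.
Proof.
move=> h1 h2 h3; case: (mk4E a b c e) => e0 e1 e2 e3.
apply: (@std_mk4 _ _ a b c e).
- exact: h1.
- by rewrite /inL e0 e1 e2 e3.
- by rewrite /Nw e0 e1 e2.
Qed.

Ltac stdtac a b c e := apply: (@std_mk4' _ _ a b c e); lia.

Lemma std_ex d j : (1 <= d)%N -> (j < 4)%N ->
  exists u : mon d, ~~ inL (vv u) /\ Nw (vv u) = j.
Proof.
case: d => [//|[|[|d]]] _ hj.
- case: j hj => [|[|[|[|j]]]] // _.
  + stdtac 0%N 0%N 0%N 1%N.
  + stdtac 0%N 0%N 1%N 0%N.
  + stdtac 1%N 0%N 0%N 0%N.
  + stdtac 0%N 1%N 0%N 0%N.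
- case: j hj => [|[|[|[|j]]]] // _.
  + stdtac 0%N 0%N 0%N 2%N.
  + stdtac 0%N 0%N 1%N 1%N.
  + stdtac 0%N 0%N 2%N 0%N.
  + stdtac 0%N 1%N 0%N 1%N.
- stdtac 0%N 0%N j (d.+3 - j)%N.
Qed.

Lemma std_uniq d (u u' : mon d) : ~~ inL (vv u) -> ~~ inL (vv u') ->
  Nw (vv u) = Nw (vv u') -> u = u'.
Proof.
move=> h h' hN; apply: vv_inj; apply: std_inj => //.
by rewrite !vv_deg.
Qed.

Lemma card_std d : #|[pred u : mon d | ~~ inL (vv u)]| = hf d.
Proof.
case: d => [|d].
  have [u0 hu0] := mon_ex (@mdeg0 4).
  rewrite /hf /=; apply: (card1_uniq (u0 := u0)).
    by rewrite /= hu0; apply/negP => /inL_deg; rewrite mdeg0.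
  move=> u _; apply: vv_inj; rewrite hu0; apply/eqP; rewrite -mdeg_eq0.
  by rewrite vv_deg.
rewrite /hf /= -sum1_card.
rewrite (partition_big (fun u : mon d.+1 => (inord (Nw (vv u)) : 'I_4)) xpredT) //=.
rewrite (eq_bigr (fun _ => 1%N)) ?sum_nat_const ?card_ord // => j _.
rewrite sum1_card.
have [u0 [h0 e0]] := std_ex (isT : (1 <= d.+1)%N) (ltn_ord j).
apply: (card1_uniq (u0 := u0)).
  by rewrite inE /= h0 e0 inord_val eqxx.
move=> u /andP []; rewrite inE /= => hu /eqP hj; apply: std_uniq => //.
by rewrite e0 -hj inordK // std_N.
Qed.

Lemma card_inL d : #|[pred u : mon d | inL (vv u)]| = rk d.
Proof.
have h : #|[predC [pred u : mon d | inL (vv u)]]| = hf d.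
  by rewrite -card_std; apply: eq_card.
by rewrite /rk -(cardC [pred u : mon d | inL (vv u)]) h addnK.
Qed.

Section Lbasis.
Variable k : fieldType.

Lemma L_basis d : exists B, basis_of_deg k (Llex k) d B.
Proof.
pose A := [pred u : mon d | inL (vv u)].
have hc : rk d = #|A| by rewrite card_inL.
pose ev i := enum_val (cast_ord hc i).
have evA i : inL (vv (ev i)) by have := enum_valP (cast_ord hc i).
have ev_inj : injective ev by move=> i j /enum_val_inj /cast_ord_inj.
have evsum (c : 'I_(rk d) -> k) i : \sum_(j < rk d) c j * ((ev i == ev j)%:R) = c i.
  rewrite (bigD1 i) //= eqxx mulr1 big1 ?addr0 // => j ne.
  by case: eqP => [/ev_inj E|]; [rewrite E eqxx in ne | rewrite mulr0].
exists (fun i u => (u == ev i)%:R); split.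
  move=> c; rewrite vec_lin => /vec_eq0 h i; rewrite -(h (ev i)).
  by rewrite evsum.
move=> p; rewrite Lhom_char; split.
  case=> g [-> hg]; exists (fun i => g (ev i)); rewrite vec_lin; apply: vec_eq => u.
  have [hu|hu] := boolP (inL (vv u)).
    have hA : u \in A by [].
    pose i0 := cast_ord (esym hc) (enum_rank_in hA u).
    have -> : u = ev i0 by rewrite /ev /i0 cast_ordKV enum_rankK_in.
    by rewrite evsum.
  rewrite hg // big1 // => j _; case: eqP => [E|]; last by rewrite mulr0.
  by move: (evA j); rewrite -E (negbTE hu).
case=> c ->; rewrite vec_lin; eexists; split; first reflexivity.
move=> u hu /=; rewrite big1 // => j _; case: eqP => [E|]; last by rewrite mulr0.
by move: (evA j); rewrite -E (negbTE hu).
Qed.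

Lemma L_inH : in_H k (Llex k).
Proof. by split; [exact: Lhomog | exact: L_basis]. Qed.

End Lbasis.
Section Points.
Variable k : closedFieldType.

Definition pt (l t c : k) : 'I_4 -> k :=
  fun j => l * nth 0 [:: t ^+ 8 * c ^+ 2; t ^+ 4 * c ^+ 3; t * c; 1] j.

Definition wgt (l t c : k) (m : 'X_{1..4}) : k :=
  l ^+ mdeg m * (t ^+ om m * c ^+ Nw m).

Lemma evX l t c m : ('X_[m] : Defs.Poly k).@[pt l t c] = wgt l t c m.
Proof.
rewrite mevalX big4 /pt /wgt mdeg4 /om /Nw /=.
set a := m i0; set b := m i1; set cc := m i2; set e := m i3.
rewrite !exprMn !expr1n !mulr1 !exprD !expr0.
move: (l ^+ a) (l ^+ b) (l ^+ cc) (l ^+ e) (t ^+ a) (t ^+ b) (t ^+ cc) (c ^+ a) (c ^+ b) (c ^+ cc).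
move=> *; ring.
Qed.


Lemma ev_poly p l t c : p.@[pt l t c] = \sum_(m <- msupp p) p@_m * wgt l t c m.
Proof.
rewrite {1}(mpolyE p) raddf_sum /=; apply: eq_bigr => m _.
by rewrite mevalZ evX.
Qed.

Lemma ev_vec d (g : mon d -> k) l t c : (vec_of k d g).@[pt l t c] =
  l ^+ d * \sum_(u : mon d) g u * (t ^+ om (vv u) * c ^+ Nw (vv u)).
Proof.
rewrite /vec_of raddf_sum mulr_sumr /=; apply: eq_bigr => u _.
by rewrite mevalZ /monpoly evX /wgt vv_deg mulrCA.
Qed.

Lemma hcomp_idem d p : Defs.hcomp k d (Defs.hcomp k d p) = Defs.hcomp k d p.
Proof. by apply/mpolyP => m; rewrite !hcomp_coef; case: (mdeg m == d). Qed.

Lemma ev_hcomp d p l t c :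
  (Defs.hcomp k d p).@[pt l t c] = l ^+ d * (Defs.hcomp k d p).@[pt 1 t c].
Proof.
by rewrite (hom_vec (hcomp_idem d p)) !ev_vec expr1n mul1r.
Qed.

Lemma hsum p : p = \sum_(e < msize p) Defs.hcomp k e p.
Proof.
apply/mpolyP => m; rewrite raddf_sum /=.
under eq_bigr do rewrite hcomp_coef.
have [h|h] := ltnP (mdeg m) (msize p).
  rewrite (bigD1 (Ordinal h)) //= eqxx big1 ?addr0 // => e ne.
  case: eqP => // E; case/eqP: ne; apply/val_inj => /=; by rewrite E.
rewrite big1; first by apply/memN_msupp_eq0/msize_mdeg_ge.
move=> e _; case: eqP => // E.
by move: (ltn_ord e); rewrite -E ltnNge h.
Qed.

Definition Gp p (t c : k) : {poly k} :=
  \sum_(e < msize p) ((Defs.hcomp k e p).@[pt 1 t c]) *: 'X^e.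

Lemma Gp_eval p t c l : (Gp p t c).[l] = p.@[pt l t c].
Proof.
rewrite /Gp horner_sum [in RHS](hsum p) raddf_sum /=; apply: eq_bigr => e _.
by rewrite hornerZ hornerXn [RHS]ev_hcomp mulrC.
Qed.

Lemma Gp_coef p t c e : (e < msize p)%N -> (Gp p t c)`_e = (Defs.hcomp k e p).@[pt 1 t c].
Proof.
move=> h; rewrite /Gp coef_sum (bigD1 (Ordinal h)) //= coefZ coefXn eqxx mulr1.
rewrite big1 ?addr0 // => e' ne; rewrite coefZ coefXn.
case: eqP => [E|]; last by rewrite mulr0.
by case/eqP: ne; apply/val_inj.
Qed.

Lemma poly_zero (G : {poly k}) : (forall x, x != 0 -> G.[x] = 0) -> G = 0.
Proof.
move=> h; apply/eqP; apply: contraT => nz.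
have nz2 : G * 'X != 0 by rewrite mulf_neq0 // polyX_eq0.
case/closed_nonrootP: nz2 => x; rewrite /root hornerM hornerX.
have [->|xn0] := eqVneq x 0; first by rewrite mulr0 eqxx.
by rewrite h // mul0r eqxx.
Qed.

Variable z : 'I_4 -> k.

Definition J (t : k) : Defs.Poly k -> Prop :=
  fun p => forall i l, p.@[pt l t (z i)] = 0.

Lemma J_ideal t : is_ideal k (J t).
Proof.
split.
- by move=> i l; rewrite meval0.
- by move=> p q hp hq i l; rewrite mevalD hp hq addr0.
- by move=> p q hq i l; rewrite mevalM hq mulr0.
Qed.

Lemma J_homog t : is_homog_ideal k (J t).
Proof.
split; first exact: J_ideal.
move=> p d hp i l.
have G0 : Gp p t (z i) = 0 by apply: poly_zero => x _; rewrite Gp_eval hp.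
rewrite ev_hcomp.
have [h|h] := ltnP d (msize p).
  by rewrite -Gp_coef // G0 coef0 mulr0.
suff -> : Defs.hcomp k d p = 0 by rewrite meval0 mulr0.
apply/mpolyP => m; rewrite hcomp_coef mcoeff0; case: eqP => // E.
by apply/memN_msupp_eq0/msize_mdeg_ge; rewrite E.
Qed.

Lemma J_sat t : saturated k (J t).
Proof.
move=> f [n H] i l.
suff G0 : Gp f t (z i) = 0 by rewrite -Gp_eval G0 horner0.
apply: poly_zero => x xn0; rewrite Gp_eval.
pose m := (U_(i3) *+ n)%MM.
have hm : mdeg m = n by rewrite mdegMn mdeg1 mul1n.
have := H m hm i x; rewrite mevalM evX /wgt hm.
have -> : om m = 0%N by rewrite /om !mulmnE !mnm1E.
have -> : Nw m = 0%N by rewrite /Nw !mulmnE !mnm1E.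
rewrite !expr0 !mulr1 => /eqP; rewrite mulf_eq0 expf_eq0 (negbTE xn0) andbF /=.
by move/eqP.
Qed.

End Points.
Lemma sum_uniq (R : nmodType) (T : finType) (P : pred T) (F : T -> R) u0 :
  P u0 -> (forall u, P u -> u = u0) -> \sum_(u | P u) F u = F u0.
Proof.
move=> h0 h; rewrite (big_pred1 u0) // => u /=.
by apply/idP/eqP => [/h //|->].
Qed.

Section Frames.
Variable k : closedFieldType.
Variable z : 'I_4 -> k.
Hypothesis zinj : injective z.

Definition zs : seq k := [seq z i | i <- enum 'I_4].
Definition Pz : {poly k} := \prod_(a <- zs) ('X - a%:P).
Definition rr (n : nat) : {poly k} := 'X^n %% Pz.

Lemma Pz_size : size Pz = 5%N.
Proof. by rewrite /Pz size_prod_XsubC size_map size_enum_ord. Qed.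

Lemma Pz_neq0 : Pz != 0.
Proof. by rewrite -size_poly_eq0 Pz_size. Qed.

Lemma rr_size n : (size (rr n) <= 4)%N.
Proof. by rewrite -ltnS -Pz_size ltn_modp Pz_neq0. Qed.

Lemma rr_eval n i : (rr n).[z i] = z i ^+ n.
Proof.
have := divp_eq ('X^n) Pz; rewrite -/(rr n) => /(congr1 (fun q => q.[z i])).
rewrite hornerD hornerM hornerXn.
have -> : Pz.[z i] = 0.
  by apply/eqP; rewrite -/(root Pz (z i)) root_prod_XsubC map_f // mem_enum.
by rewrite mulr0 add0r.
Qed.

Lemma zs_uniq : uniq zs.
Proof. by rewrite map_inj_uniq ?enum_uniq. Qed.

Lemma std_sum d (q : {poly k}) c : (1 <= d)%N -> (size q <= 4)%N ->
  \sum_(u : mon d | ~~ inL (vv u)) q`_(Nw (vv u)) * c ^+ Nw (vv u) = q.[c].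
Proof.
move=> hd hq; rewrite (horner_coef_wide _ hq).
rewrite (partition_big (fun u : mon d => (inord (Nw (vv u)) : 'I_4)) xpredT) //=.
apply: eq_bigr => j _.
have [u0 [h0 e0]] := std_ex hd (ltn_ord j).
rewrite (@sum_uniq _ _ _ _ u0).
- by rewrite e0.
- by rewrite h0 e0 inord_val eqxx.
move=> u /andP [hu /eqP hj]; apply: std_uniq => //.
by rewrite e0 -hj inordK // std_N.
Qed.

Definition Et d (t : k) (beta : mon d -> k) (u : mon d) : k :=
  if inL (vv u) then beta u
  else - \sum_(m : mon d | inL (vv m))
           beta m * (rr (Nw (vv m)))`_(Nw (vv u)) * t ^+ (om (vv m) - om (vv u)).

Lemma Et_lin d t n (c : 'I_n -> k) (B : 'I_n -> mon d -> k) u :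
  \sum_(i < n) c i * Et t (B i) u = Et t (fun u => \sum_(i < n) c i * B i u) u.
Proof.
rewrite /Et; case: ifP => // _.
under eq_bigr do rewrite mulrN mulr_sumr.
rewrite sumrN exchange_big /=; congr (- _); apply: eq_bigr => m _.
rewrite !big_distrl /=; apply: eq_bigr => i _.
by rewrite !mulrA.
Qed.

Lemma Et_in_J d t (beta : mon d -> k) : J z t (vec_of k d (Et t beta)).
Proof.
move=> i l; rewrite ev_vec; apply/eqP; rewrite mulf_eq0; apply/orP; right.
set c := z i.
rewrite (bigID (fun u : mon d => inL (vv u))) /=.
have -> : \sum_(u : mon d | ~~ inL (vv u)) Et t beta u * (t ^+ om (vv u) * c ^+ Nw (vv u)) =
  - \sum_(m : mon d | inL (vv m)) beta m * t ^+ om (vv m) *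
      \sum_(u : mon d | ~~ inL (vv u)) (rr (Nw (vv m)))`_(Nw (vv u)) * c ^+ Nw (vv u).
  under [in RHS]eq_bigr do rewrite mulr_sumr.
  rewrite [in RHS]exchange_big /= -sumrN.
  apply: eq_bigr => u hu; rewrite /Et (negbTE hu) mulNr.
  rewrite big_distrl /=; congr (- _); apply: eq_bigr => m hm.
  have hle : (om (vv u) <= om (vv m))%N.
    by apply/ltnW/om_lt => //; rewrite !vv_deg.
  rewrite -{2}(subnK hle) exprD.
  move: (beta m) ((rr (Nw (vv m)))`_(Nw (vv u))) (t ^+ (om (vv m) - om (vv u))).
  move: (t ^+ om (vv u)) (c ^+ Nw (vv u)) => *; ring.
rewrite subr_eq0; apply/eqP.
apply: eq_bigr => m hm; rewrite /Et hm.
have hd : (1 <= d)%N by rewrite -(vv_deg m); apply: leq_trans (inL_deg hm).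
rewrite std_sum // ?rr_size // rr_eval.
by rewrite mulrA.
Qed.


Lemma J_uniq d t (rho : mon d -> k) : t != 0 ->
  (forall u, inL (vv u) -> rho u = 0) -> J z t (vec_of k d rho) ->
  forall u, rho u = 0.
Proof.
move=> tn0 hL hJ u0.
have [hu0|hu0] := boolP (inL (vv u0)); first exact: hL.
pose R : {poly k} := \sum_(u : mon d | ~~ inL (vv u)) (rho u * t ^+ om (vv u)) *: 'X^(Nw (vv u)).
have Rsize : (size R <= 4)%N.
  rewrite /R; apply: (big_ind (fun q : {poly k} => (size q <= 4)%N)).
  - by rewrite size_poly0.
  - by move=> p q hp hq; apply: leq_trans (size_add _ _) _; rewrite geq_max hp hq.
  - move=> u hu; apply: leq_trans (size_scale_leq _ _) _.
    by rewrite size_polyXn; apply: std_N.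
have Rroot : all (root R) zs.
  apply/allP => x /mapP [i _ ->]; rewrite /root.
  have := hJ i 1; rewrite ev_vec expr1n mul1r => <-.
  apply/eqP; rewrite /R horner_sum [in RHS](bigID (fun u : mon d => inL (vv u))) /=.
  rewrite [X in _ = X + _]big1 ?add0r; last by move=> u /hL ->; rewrite mul0r.
  apply: eq_bigr => u _; rewrite hornerZ hornerXn.
  by rewrite mulrA.
have R0 : R = 0.
  apply/eqP; apply: contraT => nz.
  have := max_poly_roots nz Rroot; rewrite zs_uniq size_map size_enum_ord.
  by move=> /(_ isT) h; move: (leq_ltn_trans Rsize h); rewrite ltnn.
have := congr1 (fun q : {poly k} => q`_(Nw (vv u0))) R0.
rewrite coef0 /R coef_sum (bigD1 u0) //= coefZ coefXn eqxx mulr1.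
rewrite big1 ?addr0.
  by move/eqP; rewrite mulf_eq0 expf_eq0 (negbTE tn0) andbF orbF => /eqP.
move=> u /andP [hu ne]; rewrite coefZ coefXn.
case: eqP => [E|]; last by rewrite mulr0.
by move: ne; rewrite (std_uniq hu hu0 (esym E)) eqxx.
Qed.

Lemma Lsupp d (B : 'I_(rk d) -> mon d -> k) : basis_of_deg k (Llex k) d B ->
  forall i u, ~~ inL (vv u) -> B i u = 0.
Proof.
case=> _ hs i u hu.
have : Llex k (vec_of k d (B i)) /\ Defs.hcomp k d (vec_of k d (B i)) = vec_of k d (B i).
  apply/hs; exists (fun j => (j == i)%:R).
  rewrite (bigD1 i) //= eqxx scale1r big1 ?addr0 // => j /negbTE ->.
  by rewrite scale0r.
case/Lhom_char => g [E hg].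
by rewrite -(vec_coef (B i) u) E vec_coef hg.
Qed.

Lemma vec_zero d : vec_of k d (fun _ => 0) = 0.
Proof. by rewrite /vec_of big1 // => u _; rewrite scale0r. Qed.

Lemma J_basis d t (B : 'I_(rk d) -> mon d -> k) : t != 0 ->
  basis_of_deg k (Llex k) d B -> basis_of_deg k (J z t) d (fun i => Et t (B i)).
Proof.
move=> tn0 hB; have hS := Lsupp hB; case: hB => hI hs; split.
  move=> c; rewrite vec_lin => /vec_eq0 h; apply: hI.
  rewrite vec_lin -(vec_zero d); apply: vec_eq => u.
  have := h u; rewrite Et_lin /Et; case: ifP => // hu _.
  by rewrite big1 // => i _; rewrite hS ?hu // mulr0.
move=> p; split.
  case=> hp hh.
  pose g := fun u : mon d => if inL (vv u) then p@_(vv u) else 0.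
  have [c hc] : exists c : 'I_(rk d) -> k, vec_of k d g = \sum_(i < rk d) c i *: vec_of k d (B i).
    apply/hs; apply/Lhom_char; exists g; split => // u hu.
    by rewrite /g (negbTE hu).
  have hcu u : g u = \sum_(i < rk d) c i * B i u.
    by rewrite -(vec_coef g u) hc vec_lin vec_coef.
  exists c; rewrite vec_lin.
  have -> : vec_of k d (fun u => \sum_(i < rk d) c i * Et t (B i) u) =
            vec_of k d (Et t (fun u => \sum_(i < rk d) c i * B i u)).
    by apply: vec_eq => u; rewrite Et_lin.
  apply/eqP; rewrite -subr_eq0; apply/eqP.
  rewrite {1}(hom_vec hh) vecB -(vec_zero d); apply: vec_eq.
  apply: (J_uniq tn0).
    by move=> u hu; rewrite /Et hu -hcu /g hu subrr.
  rewrite -vecB -(hom_vec hh) => i l.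
  by rewrite mevalB hp (Et_in_J _ _ i l) subrr.
case=> c ->; rewrite vec_lin.
have -> : vec_of k d (fun u => \sum_(i < rk d) c i * Et t (B i) u) =
          vec_of k d (Et t (fun u => \sum_(i < rk d) c i * B i u)).
  by apply: vec_eq => u; rewrite Et_lin.
by split; [exact: Et_in_J | exact: hcomp_vec].
Qed.

Lemma J_inH t : t != 0 -> in_H k (J z t).
Proof.
move=> tn0; split; first exact: J_homog.
move=> d; have [B hB] := L_basis k d.
by exists (fun i => Et t (B i)); apply: J_basis.
Qed.

Lemma J_satloc t : t != 0 -> sat_locus k (J z t).
Proof. by move=> tn0; split; [exact: J_inH | exact: J_sat]. Qed.

End Frames.
Lemma mmap_horner (k : closedFieldType) n (f : {mpoly k[n]}) (h : 'I_n -> {poly k}) t :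
  (mmap (fun c : k => c%:P) h f).[t] = f.@[fun j => (h j).[t]].
Proof.
rewrite /meval /mmap horner_sum; apply: eq_bigr => m _.
rewrite hornerM hornerC /mmap1 horner_prod; congr (_ * _).
by apply: eq_bigr => i _; rewrite horner_exp.
Qed.

Lemma fresh (k : closedFieldType) (s : seq k) : exists x, x \notin s.
Proof.
have nz : \prod_(a <- s) ('X - a%:P) != 0 :> {poly k}.
  by apply: monic_neq0; apply: monic_prod_XsubC.
by case/closed_nonrootP: nz => x; rewrite root_prod_XsubC => h; exists x.
Qed.

Lemma zexists (k : closedFieldType) : exists z : 'I_4 -> k, injective z.
Proof.
have [z0 _] := fresh ([::] : seq k).
have [z1 h1] := fresh [:: z0].
have [z2 h2] := fresh [:: z0; z1].
have [z3 h3] := fresh [:: z0; z1; z2].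
pose s := [:: z0; z1; z2; z3].
have us : uniq s.
  rewrite /s /= !inE !negb_or in h1 h2 h3 *.
  case/andP: h2 => a2 b2; case/and3P: h3 => a3 b3 c3.
  by rewrite eq_sym h1 eq_sym a2 eq_sym a3 eq_sym b2 eq_sym b3 eq_sym c3.
exists (fun i => nth 0 s i) => i j /eqP; rewrite nth_uniq // => /eqP h.
exact: val_inj.
Qed.

Section Main.
Variable k : closedFieldType.
Variable z : 'I_4 -> k.
Hypothesis zinj : injective z.

Definition EtP d (beta : mon d -> k) (u : mon d) : {poly k} :=
  if inL (vv u) then (beta u)%:P
  else - \sum_(m : mon d | inL (vv m))
           (beta m * (rr z (Nw (vv m)))`_(Nw (vv u))) *: 'X^(om (vv m) - om (vv u)).

Lemma EtP_eval d beta u t : (@EtP d beta u).[t] = Et z t beta u.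
Proof.
rewrite /EtP /Et; case: ifP => _; first by rewrite hornerC.
rewrite hornerN horner_sum; congr (- _); apply: eq_bigr => m _.
by rewrite hornerZ hornerXn.
Qed.

Lemma EtP_0 d beta u : (forall u, ~~ inL (vv u) -> beta u = 0) ->
  (@EtP d beta u).[0] = beta u.
Proof.
move=> h; rewrite /EtP; case: ifP => hu; first by rewrite hornerC.
rewrite h ?hu // hornerN horner_sum big1 ?oppr0 // => m hm.
rewrite hornerZ hornerXn expr0n.
have : (0 < om (vv m) - om (vv u))%N.
  by rewrite subn_gt0; apply: om_lt => //; [rewrite hu | rewrite !vv_deg].
by case: (om (vv m) - om (vv u))%N => // n _; rewrite mulr0.
Qed.

Lemma main_closure : in_closure k (sat_locus k) (Llex k).
Proof.
split; first exact: L_inH.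
move=> D a ha f hf.
pose bt (t : k) : Var D -> k := fun v =>
  let: existT d (i, u) := v in Et z t (fun u' => a (existT _ d (i, u'))) u.
pose bp : Var D -> {poly k} := fun v =>
  let: existT d (i, u) := v in @EtP d (fun u' => a (existT _ d (i, u'))) u.
pose F := mmap (fun c : k => c%:P) (fun j => bp (enum_val j)) f.
have F0 : F = 0.
  apply: poly_zero => x xn0; rewrite mmap_horner.
  rewrite (@meval_eq _ _ _ (fun j => bt x (enum_val j))); last first.
    by move=> j; case: (enum_val j) => d [i u]; rewrite EtP_eval.
  apply: (hf (J z x)); first exact: J_satloc.
  by move=> d; apply: J_basis => //; exact: ha.
have := congr1 (fun q : {poly k} => q.[0]) F0; rewrite horner0 mmap_horner => <-.
rewrite /evalV; apply: meval_eq => j; case: (enum_val j) => d [i u] /=.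
rewrite EtP_0 // => u' hu'; exact: (Lsupp (ha d) _ hu').
Qed.

End Main.

Unset Implicit Arguments.
Set Strict Implicit.

Theorem lemma4p1 (k : closedFieldType) (hchar : (2%N \notin [pchar k])) :
  in_closure k (sat_locus k) (Llex k).
Proof.
have [z zinj] := zexists k.
exact: (main_closure zinj).
Qed.
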